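(* Two irrationals $\alpha,\beta\in(1,2)$ are $\mathrm{PSL}(2,\mathbb Z)$-equivalent (i.e. $\beta=g\alpha$ for some $g\in\mathrm{PSL}(2,\mathbb Z)$ acting by Möbius transformations) if and only if there exist integers $r,s>0$ such that $t_r(\alpha)=t_s(\beta)$. Moreover, $\alpha$ is $\mathrm{PSL}(2,\mathbb Z)$-equivalent to each of its tails $t_m(\alpha)$.
   Context: The Lehner map on $[1,2)$ is $L(x)=\frac{1}{2-x}$ for $x\in[1,3/2)$ and $L(x)=\frac{1}{x-1}$ for $x\in[3/2,2)$. For irrational $x\in(1,2)$, its Lehner digits are $(a_i,\epsilon_i)=(2,-1)$ if $L^i(x)\in[1,3/2)$ and $(1,+1)$ if $L^i(x)\in[3/2,2)$, and $x=a_0+\cfrac{\epsilon_0}{a_1+\cfrac{\epsilon_1}{a_2+\cdots}}=[\![(a_0,\epsilon_0)(a_1,\epsilon_1)\cdots]\!]$. For $\alpha=[\![(a_0,\epsilon_0)(a_1,\epsilon_1)\cdots]\!]$ the $m$-tail is $t_m(\alpha)=(-\epsilon_0)(-\epsilon_1)\cdots(-\epsilon_m)\,[\![(a_{m+1},\epsilon_{m+1})(a_{m+2},\epsilon_{m+2})\cdots]\!]$, where $[\![\cdots]\!]$ denotes the value of the continued fraction with those digits. *)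

(* Defs.v *)
From Stdlib Require Import Reals ZArith.
Open Scope R_scope.

(* The Lehner map on [1,2): L(x) = 1/(2-x) on [1,3/2), 1/(x-1) on [3/2,2).
   (Made total on R; only its values on (1,2) matter.) *)
Definition lehner (x : R) : R :=
  if Rlt_dec x (3/2) then / (2 - x) else / (x - 1).

Definition lehner_iter (n : nat) (x : R) : R := Nat.iter n lehner x.

Definition lehner_eps (x : R) (i : nat) : R :=
  if Rlt_dec (lehner_iter i x) (3/2) then -1 else 1.
Definition lehner_a (x : R) (i : nat) : R :=
  if Rlt_dec (lehner_iter i x) (3/2) then 2 else 1.

Fixpoint cf_conv (a e : nat -> R) (n k : nat) : R :=
  match n with
  | O => a k
  | S n' => a k + e k / cf_conv a e n' (S k)
  end.

Definition cf_value (a e : nat -> R) (k : nat) (v : R) : Prop :=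
  Un_cv (fun n => cf_conv a e n k) v.

Fixpoint neg_eps_prod (x : R) (m : nat) : R :=
  match m with
  | O => - lehner_eps x 0
  | S m' => neg_eps_prod x m' * (- lehner_eps x (S m'))
  end.

Definition is_tail (x : R) (m : nat) (y : R) : Prop :=
  exists v, cf_value (lehner_a x) (lehner_eps x) (S m) v /\
            y = neg_eps_prod x m * v.

Definition irrational (x : R) : Prop :=
  forall p q : Z, q <> 0%Z -> x <> IZR p / IZR q.

Definition psl2z_equiv (alpha beta : R) : Prop :=
  exists a b c d : Z, (a * d - b * c = 1)%Z /\
    beta = (IZR a * alpha + IZR b) / (IZR c * alpha + IZR d).

(* Main.v *)
Require Import Defs.
From Stdlib Require Import Reals ZArith Lia Lra Psatz.
Open Scope R_scope.

Definition irr' (x : R) : Prop := forall i j : Z, IZR i * x + IZR j = 0 -> i = 0%Z /\ j = 0%Z.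

Lemma irr_irr' x : irrational x -> irr' x.
Proof.
  intros H i j E.
  destruct (Z.eq_dec i 0) as [->|Hi].
  - split; auto. apply eq_IZR. lra.
  - exfalso. apply (H (- j)%Z i Hi). rewrite opp_IZR.
    assert (IZR i <> 0) by (intro; apply Hi; apply eq_IZR; auto).
    apply (Rmult_eq_reg_r (IZR i)); [| auto]. unfold Rdiv. rewrite Rmult_assoc, Rinv_l; auto. lra.
Qed.


Lemma irr'_not_half x : irr' x -> x <> 3/2.
Proof.
  intros H E. destruct (H 2%Z (-3)%Z) as [h _]. rewrite E. simpl. lra. discriminate.
Qed.

Lemma irr'_shift x : irr' x -> irr' (x - 1).
Proof.
  intros H i j E. destruct (H i (j - i)%Z) as [h1 h2].
  rewrite minus_IZR. lra. subst. lia.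
Qed.

Lemma lehner_props x : irr' x -> 1 < x < 2 -> irr' (lehner x) /\ 1 < lehner x < 2.
Proof.
  intros H [h1 h2]. pose proof (irr'_not_half x H) as Hh.
  unfold lehner. destruct (Rlt_dec x (3/2)) as [l|l].
  - assert (E: (2 - x) * / (2 - x) = 1) by (field; lra).
    split.
    + intros i j Eq. destruct (H (- j)%Z (i + 2 * j)%Z) as [a b].
      rewrite opp_IZR, plus_IZR, mult_IZR.
      assert (Eq2: (IZR i * / (2 - x) + IZR j) * (2 - x) = 0) by (rewrite Eq; ring).
      replace ((IZR i * / (2 - x) + IZR j) * (2 - x)) with (IZR i + IZR j * (2 - x)) in Eq2 by (field; lra).
      simpl. lra. lia.
    + nra.
  - assert (x > 3/2) by lra.
    assert (E: (x - 1) * / (x - 1) = 1) by (field; lra).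
    split.
    + intros i j Eq. destruct (H j (i - j)%Z) as [a b].
      rewrite minus_IZR.
      assert (Eq2: (IZR i * / (x - 1) + IZR j) * (x - 1) = 0) by (rewrite Eq; ring).
      replace ((IZR i * / (x - 1) + IZR j) * (x - 1)) with (IZR i + IZR j * (x - 1)) in Eq2 by (field; lra).
      lra. lia.
    + nra.
Qed.

Definition X (x : R) (k : nat) := lehner_iter k x.

Lemma X_S x k : X x (S k) = lehner (X x k).
Proof. reflexivity. Qed.

Lemma X_shift x k : X x (S k) = X (lehner x) k.
Proof. unfold X, lehner_iter. rewrite Nat.iter_succ_r. reflexivity. Qed.

Lemma X_props x : irr' x -> 1 < x < 2 -> forall k, irr' (X x k) /\ 1 < X x k < 2.
Proof.
  intros H h k. induction k. { simpl. auto. }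
  rewrite X_S. destruct IHk. apply lehner_props; auto.
Qed.

Lemma X_eq x k : irr' x -> 1 < x < 2 ->
  X x k = lehner_a x k + lehner_eps x k / X x (S k).
Proof.
  intros H h. destruct (X_props x H h k) as [_ hk].
  rewrite X_S. unfold lehner_a, lehner_eps, lehner. fold (X x k).
  destruct (Rlt_dec (X x k) (3/2)); field; lra.
Qed.

Lemma conv_range x : forall n k, 1 <= cf_conv (lehner_a x) (lehner_eps x) n k <= 2.
Proof.
  induction n; intro k; simpl.
  - unfold lehner_a. destruct Rlt_dec; lra.
  - destruct (IHn (S k)) as [a b]. set (c := cf_conv _ _ n (S k)) in *.
    assert (E: c * / c = 1) by (field; lra).
    unfold lehner_a, lehner_eps. destruct Rlt_dec; unfold Rdiv; nra.
Qed.

Lemma conv_step x n k : irr' x -> 1 < x < 2 ->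
  Rabs (cf_conv (lehner_a x) (lehner_eps x) (S n) k - X x k)
  <= Rabs (cf_conv (lehner_a x) (lehner_eps x) n (S k) - X x (S k)) *
     (if Rlt_dec (X x (S k)) (3/2) then 1 else 2/3).
Proof.
  intros H h. rewrite (X_eq x k H h). simpl. change (lehner (X x k)) with (X x (S k)).
  destruct (X_props x H h (S k)) as [_ hk].
  pose proof (conv_range x n (S k)) as hc.
  set (c := cf_conv _ _ n (S k)) in *. set (y := X x (S k)) in *.
  replace (lehner_a x k + lehner_eps x k / c - (lehner_a x k + lehner_eps x k / y))
    with (lehner_eps x k * ((y - c) / (c * y))) by (field; lra).
  assert (He: Rabs (lehner_eps x k) = 1) by (unfold lehner_eps; destruct Rlt_dec; unfold Rabs; destruct Rcase_abs; lra).
  rewrite Rabs_mult, He, Rmult_1_l.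
  unfold Rdiv. rewrite Rabs_mult. rewrite (Rabs_pos_eq (/ (c*y))).
  2: { apply Rlt_le, Rinv_0_lt_compat. nra. }
  rewrite <- Rabs_Ropp, Ropp_minus_distr.
  assert (0 <= Rabs (c - y)) by apply Rabs_pos.
  assert (E: (c*y) * / (c*y) = 1) by (field; lra).
  assert (W: 0 < / (c*y)) by (apply Rinv_0_lt_compat; nra).
  apply Rmult_le_compat_l; auto.
  assert (c * y >= 1) by nra.
  assert (y >= 3/2 -> c * y >= 3/2) by (intro; nra).
  destruct Rlt_dec.
  - set (z := c*y) in *. set (w := /z) in *. nra.
  - assert (c * y >= 3/2) by (apply H2; lra). set (z := c*y) in *. set (w := /z) in *. nra.
Qed.

Lemma conv_nonexp x d : irr' x -> 1 < x < 2 -> forall n k,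
  Rabs (cf_conv (lehner_a x) (lehner_eps x) (n + d) k - X x k)
  <= Rabs (cf_conv (lehner_a x) (lehner_eps x) n (k + d) - X x (k + d)).
Proof.
  intros H h. induction d; intros n k.
  - rewrite !Nat.add_0_r. lra.
  - replace (n + S d)%nat with (S (n + d)) by lia.
    eapply Rle_trans. apply conv_step; auto.
    replace (k + S d)%nat with (S k + d)%nat by lia.
    pose proof (IHd n (S k)). pose proof (Rabs_pos (cf_conv (lehner_a x) (lehner_eps x) (n + d) (S k) - X x (S k))).
    destruct Rlt_dec; nra.
Qed.

Lemma inf_B x : irr' x -> 1 < x < 2 -> forall k, exists j, (k <= j)%nat /\ 3/2 <= X x j.
Proof.
  intros H h k. apply Classical_Prop.NNPP. intro C.
  assert (A: forall j, (k <= j)%nat -> X x j < 3/2).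
  { intros j hj. apply Rnot_le_lt. intro. apply C. eauto. }
  assert (B: forall t, / (X x (k + t) - 1) = / (X x k - 1) - INR t).
  { induction t. { rewrite Nat.add_0_r. simpl. ring. }
    replace (k + S t)%nat with (S (k + t)) by lia.
    rewrite X_S. unfold lehner. specialize (A (k+t)%nat ltac:(lia)).
    destruct (X_props x H h (k+t)) as [_ hk].
    destruct Rlt_dec; [|lra]. rewrite S_INR. replace (/ (X x k - 1) - (INR t + 1)) with (/ (X x (k + t) - 1) - 1) by lra. field. lra. }
  destruct (X_props x H h k) as [_ hk].
  set (r := / (X x k - 1)).
  destruct (archimed r) as [a1 _].
  assert (r > 0) by (apply Rinv_0_lt_compat; lra).
  set (t := Z.to_nat (up r)).
  assert (INR t = IZR (up r)). { unfold t. rewrite INR_IZR_INZ, Z2Nat.id; auto. apply le_IZR. lra. }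
  specialize (B t). destruct (X_props x H h (k+t)) as [_ hk2].
  assert (/ (X x (k + t) - 1) > 0) by (apply Rinv_0_lt_compat; lra).
  fold r in B. lra.
Qed.

Lemma conv_bound x : irr' x -> 1 < x < 2 -> forall M k, exists N, forall n, (N <= n)%nat ->
  Rabs (cf_conv (lehner_a x) (lehner_eps x) n k - X x k) <= (2/3)^M.
Proof.
  intros H h M. induction M; intro k.
  - exists 0%nat. intros n _. simpl. pose proof (conv_range x n k).
    destruct (X_props x H h k) as [_ hk]. apply Rabs_le. lra.
  - destruct (inf_B x H h (S k)) as [j [hj hB]].
    destruct (IHM j) as [N HN]. exists (N + (j - k))%nat. intros n hn.
    replace n with (S (n - (j - k)) + (j - 1 - k))%nat by lia.
    eapply Rle_trans. apply conv_nonexp; auto.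
    replace (k + (j - 1 - k))%nat with (j - 1)%nat by lia.
    eapply Rle_trans. apply conv_step; auto.
    replace (S (j - 1)) with j by lia.
    destruct Rlt_dec; [lra|].
    simpl. specialize (HN (n - (j - k))%nat ltac:(lia)). lra.
Qed.

Lemma conv_cv x k : irr' x -> 1 < x < 2 -> cf_value (lehner_a x) (lehner_eps x) k (X x k).
Proof.
  intros H h eps heps.
  destruct (pow_lt_1_zero (2/3) ltac:(rewrite Rabs_pos_eq; lra) eps heps) as [M HM].
  destruct (conv_bound x H h M k) as [N HN]. exists N. intros n hn.
  unfold R_dist. eapply Rle_lt_trans. apply HN; lia.
  specialize (HM M (le_n _)). rewrite Rabs_pos_eq in HM; auto. apply pow_le. lra.
Qed.

Definition sgnB (x : R) (k : nat) : Z := if Rlt_dec (X x k) (3/2) then 1%Z else (-1)%Z.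
Definition aZ (x : R) (k : nat) : Z := if Rlt_dec (X x k) (3/2) then 2%Z else 1%Z.

Fixpoint pz (x : R) (k : nat) : Z :=
  match k with O => 1%Z | S k' => (pz x k' * sgnB x k')%Z end.

Lemma pz_pm x k : pz x k = 1%Z \/ pz x k = (-1)%Z.
Proof.
  induction k; simpl; auto. unfold sgnB. destruct Rlt_dec; destruct IHk as [-> | ->]; auto.
Qed.

Lemma neg_eps_pz x m : neg_eps_prod x m = IZR (pz x (S m)).
Proof.
  induction m.
  - simpl. unfold sgnB, lehner_eps, X. destruct Rlt_dec; simpl; lra.
  - simpl neg_eps_prod. rewrite IHm. change (pz x (S (S m))) with (pz x (S m) * sgnB x (S m))%Z.
    rewrite mult_IZR. unfold sgnB, lehner_eps, X. destruct Rlt_dec; simpl; lra.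
Qed.

Lemma sgnB_shift x k : sgnB x (S k) = sgnB (lehner x) k.
Proof. unfold sgnB. rewrite X_shift. reflexivity. Qed.

Lemma pz_shift x n : pz x (S n) = (sgnB x 0 * pz (lehner x) n)%Z.
Proof.
  induction n.
  - change (pz x 1) with (1 * sgnB x 0)%Z. change (pz (lehner x) 0) with 1%Z. ring.
  - change (pz x (S (S n))) with (pz x (S n) * sgnB x (S n))%Z.
    rewrite IHn, sgnB_shift. simpl. ring.
Qed.

Definition mob (a b c d : Z) (x : R) : R := (IZR a * x + IZR b) / (IZR c * x + IZR d).

Lemma mob_den x (c d a b : Z) : irr' x -> (a * d - b * c = 1)%Z -> IZR c * x + IZR d <> 0.
Proof. intros H D E. destruct (H c d E). subst. lia. Qed.

Lemma mob_comp (e f g h a b c d : Z) x : IZR c * x + IZR d <> 0 ->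
  mob e f g h (mob a b c d x) = mob (e*a+f*c) (e*b+f*d) (g*a+h*c) (g*b+h*d) x.
Proof.
  intro Hd. unfold mob. rewrite !plus_IZR, !mult_IZR.
  destruct (Req_dec (IZR g * ((IZR a * x + IZR b) / (IZR c * x + IZR d)) + IZR h) 0) as [E|E].
  - assert (E2: IZR g * IZR a * x + IZR h * IZR c * x + (IZR g * IZR b + IZR h * IZR d) = 0).
    { assert (T: (IZR g * ((IZR a * x + IZR b) / (IZR c * x + IZR d)) + IZR h) * (IZR c * x + IZR d) = IZR g * IZR a * x + IZR h * IZR c * x + (IZR g * IZR b + IZR h * IZR d)) by (field; auto).
      rewrite E in T. lra. }
    rewrite E. replace ((IZR g * IZR a + IZR h * IZR c) * x + (IZR g * IZR b + IZR h * IZR d)) with 0 by lra.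
    unfold Rdiv. rewrite Rinv_0. ring.
  - assert (T: IZR g * ((IZR a * x + IZR b) / (IZR c * x + IZR d)) + IZR h = ((IZR g * IZR a + IZR h * IZR c) * x + (IZR g * IZR b + IZR h * IZR d)) / (IZR c * x + IZR d)) by (field; auto).
    assert (N: (IZR g * IZR a + IZR h * IZR c) * x + (IZR g * IZR b + IZR h * IZR d) <> 0).
    { intro E2. apply E. rewrite T, E2. unfold Rdiv. ring. }
    field. split; auto.
Qed.

Lemma mob_inv (a b c d : Z) x : (a * d - b * c = 1)%Z -> IZR c * x + IZR d <> 0 ->
  mob d (-b) (-c) a (mob a b c d x) = x.
Proof.
  intros D Hd. unfold mob. rewrite !opp_IZR.
  assert (DR: IZR a * IZR d - IZR b * IZR c = 1).
  { rewrite <- !mult_IZR, <- minus_IZR, D. reflexivity. }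
  assert (N1: IZR d * ((IZR a * x + IZR b) / (IZR c * x + IZR d)) + - IZR b = x / (IZR c * x + IZR d)).
  { transitivity (x * (IZR a * IZR d - IZR b * IZR c) / (IZR c * x + IZR d)). field; auto. rewrite DR. field; auto. }
  assert (N2: - IZR c * ((IZR a * x + IZR b) / (IZR c * x + IZR d)) + IZR a = 1 / (IZR c * x + IZR d)).
  { transitivity ((IZR a * IZR d - IZR b * IZR c) / (IZR c * x + IZR d)). field; auto. rewrite DR. field; auto. }
  rewrite N1, N2. field. auto.
Qed.

Definition Tz (x : R) (k : nat) : R := IZR (pz x k) * X x k.

Lemma Tz_step x k : irr' x -> 1 < x < 2 ->
  Tz x (S k) = mob 0 (-1) 1 (- (pz x k * aZ x k)) (Tz x k) /\
  IZR 1 * Tz x k + IZR (- (pz x k * aZ x k)) <> 0.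
Proof.
  intros H h. destruct (X_props x H h k) as [Hi hk]. pose proof (irr'_not_half _ Hi).
  unfold Tz, mob. simpl pz. rewrite X_S. unfold aZ, sgnB, lehner.
  destruct (pz_pm x k) as [-> | ->]; destruct Rlt_dec; simpl; rewrite ?opp_IZR, ?mult_IZR; simpl;
    split; try (field; lra); lra.
Qed.

Lemma Tz_equiv x : irr' x -> 1 < x < 2 -> forall k, exists a b c d : Z,
  (a * d - b * c = 1)%Z /\ Tz x k = mob a b c d x.
Proof.
  intros H h k. induction k.
  - exists 1%Z, 0%Z, 0%Z, 1%Z. split. lia. unfold Tz, mob, X. simpl. field.
  - destruct IHk as [a [b [c [d [D E]]]]].
    destruct (Tz_step x k H h) as [E1 _]. rewrite E1, E.
    rewrite mob_comp by (apply (mob_den x c d a b); auto).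
    eexists _, _, _, _. split; [|reflexivity]. nia.
Qed.

Lemma equiv_trans a1 y b1 : irr' a1 -> irr' b1 ->
  (exists a b c d : Z, (a * d - b * c = 1)%Z /\ y = mob a b c d a1) ->
  (exists a b c d : Z, (a * d - b * c = 1)%Z /\ y = mob a b c d b1) ->
  psl2z_equiv a1 b1.
Proof.
  intros H1 H2 [a [b [c [d [D E]]]]] [e [f [g [k [D' E']]]]].
  pose proof (mob_inv e f g k b1 D' (mob_den b1 g k e f H2 D')) as Inv.
  rewrite <- E' , E in Inv.
  rewrite mob_comp in Inv by (apply (mob_den a1 c d a b); auto).
  unfold psl2z_equiv. eexists _, _, _, _. split; [|symmetry; exact Inv]. nia.
Qed.

Lemma tail_Tz x m y : irr' x -> 1 < x < 2 -> is_tail x m y -> y = Tz x (S m).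
Proof.
  intros H h [v [Hv E]]. rewrite E, neg_eps_pz. unfold Tz. f_equal.
  eapply UL_sequence. exact Hv. apply conv_cv; auto.
Qed.

Lemma Tz_tail x m : irr' x -> 1 < x < 2 -> is_tail x m (Tz x (S m)).
Proof.
  intros H h. exists (X x (S m)). split. apply conv_cv; auto.
  rewrite neg_eps_pz. reflexivity.
Qed.

Lemma Tz_psl x k : irr' x -> 1 < x < 2 -> psl2z_equiv x (Tz x k).
Proof.
  intros H h. destruct (Tz_equiv x H h k) as [a [b [c [d [D E]]]]].
  exists a, b, c, d. split; auto.
Qed.

Lemma dich (p q r s : Z) : (0<=p)%Z -> (0<=q)%Z -> (0<=r)%Z -> (0<=s)%Z -> (p*s-q*r = 1 \/ p*s-q*r = -1)%Z -> (q <= s)%Z -> (p+q <= r+s)%Z -> ~(p=1/\q=0/\r=0/\s=1)%Z ->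
 (p <= r)%Z /\ ((2*q <= s /\ 2*(p+q) <= r+s) \/ (s <= 2*q /\ r+s <= 2*(p+q)))%Z.
Proof.
intros. split. nia.
assert (Hid: ((r+s)*(s-2*q) + s*(2*(p+q)-(r+s)) = 2*(p*s-q*r))%Z) by ring.
destruct (Z.lt_total s (2*q)) as [h|[h|h]]; destruct (Z.lt_total (r+s) (2*(p+q))) as [h'|[h'|h']]; try (left; lia); try (right; lia).
- exfalso. nia.
- exfalso. nia.
Qed.

Lemma div_mul_eq a b c : c <> 0 -> a = b / c -> a * c = b.
Proof. intros; subst; field; auto. Qed.

Lemma hlA z Nm Dn : Dn > 0 -> Dn - Nm > 0 -> (z - 1) * Dn = Nm -> / (2 - z) - 1 = Nm / (Dn - Nm).
Proof.
  intros h1 h2 E. assert (z = 1 + Nm / Dn) by (rewrite <- E; field; lra). subst z.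
  assert (2 - (1 + Nm/Dn) = (Dn - Nm) / Dn) by (field; lra). rewrite H. field. lra.
Qed.

Lemma hlB z Nm Dn : Dn > 0 -> Nm > 0 -> (z - 1) * Dn = Nm -> / (z - 1) - 1 = (Dn - Nm) / Nm.
Proof.
  intros h1 h2 E. assert (z - 1 = Nm / Dn) by (rewrite <- E; field; lra). rewrite H. field. lra.
Qed.

Lemma descent : forall (N : nat) (p q r s : Z) (y z : R),
  (Z.to_nat (p+q+r+s) <= N)%nat -> (0 <= p)%Z -> (0 <= q)%Z -> (0 <= r)%Z -> (0 <= s)%Z ->
  (p*s - q*r = 1 \/ p*s - q*r = -1)%Z -> (q <= s)%Z -> (p+q <= r+s)%Z ->
  irr' y -> 1 < y < 2 ->
  z - 1 = (IZR p * (y - 1) + IZR q) / (IZR r * (y - 1) + IZR s) ->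
  exists n, lehner_iter n z = y /\ pz z n = (p*s - q*r)%Z.
Proof.
  induction N; intros p q r s y z HN hP hQ hR hS D hQS hPQ Hy hy Ez.
  - exfalso. assert (p + q + r + s <= 0)%Z by lia. destruct D; nia.
  - set (v := y - 1) in *.
    assert (Hv: irr' v) by (apply irr'_shift; auto).
    assert (v0 : 0 < v < 1) by (unfold v; lra).
    destruct (Classical_Prop.classic (p = 1 /\ q = 0 /\ r = 0 /\ s = 1)%Z) as [[-> [-> [-> ->]]] | NI].
    { exists 0%nat. split; [|reflexivity]. simpl. unfold v in Ez. simpl in Ez. field_simplify in Ez. lra. }
    assert (PQ: (1 <= p + q)%Z) by (destruct D; nia).
    assert (Dpos: 0 < IZR r * v + IZR s).
    { assert (0 <= IZR r) by (apply IZR_le; auto). assert (0 <= IZR s) by (apply IZR_le; auto).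
      destruct (Z.eq_dec s 0). { subst. assert (1 <= r)%Z by (destruct D; nia). apply IZR_le in H1. simpl. nra. }
      assert (1 <= IZR s) by (apply IZR_le; lia). nra. }
    set (Dn := IZR r * v + IZR s) in *. set (Nm := IZR p * v + IZR q) in *.
    assert (NZ: IZR (2 * p - r) * v + IZR (2 * q - s) <> 0).
    { intro E. destruct (Hv _ _ E). destruct D; nia. }
    rewrite !minus_IZR, !mult_IZR in NZ.
    destruct (dich p q r s hP hQ hR hS D hQS hPQ NI) as [PR [[A1 A2] | [B1 B2]]].
    +
      assert (Hz: 2 * Nm < Dn).
      { assert (2 * Nm <= Dn).
        { unfold Nm, Dn. apply IZR_le in A1. apply IZR_le in A2. rewrite !mult_IZR, !plus_IZR in *.
          simpl in *. nra. }
        assert (2 * Nm <> Dn) by (intro; apply NZ; unfold Nm, Dn in *; lra). lra. }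
      assert (Nm0 : 0 <= Nm).
      { unfold Nm. assert (0 <= IZR p) by (apply IZR_le; auto). assert (0 <= IZR q) by (apply IZR_le; auto). nra. }
      assert (Ez2 : (z - 1) * Dn = Nm) by (apply div_mul_eq; auto; lra).
      assert (zlt : z < 3/2) by nra.
      assert (Hl : lehner z - 1 = (IZR p * v + IZR q) / (IZR (r - p) * v + IZR (s - q))).
      { unfold lehner. destruct Rlt_dec; [|lra]. rewrite !minus_IZR.
        replace ((IZR r - IZR p) * v + (IZR s - IZR q)) with (Dn - Nm) by (unfold Dn, Nm; ring).
        change (IZR p * v + IZR q) with Nm.
        apply hlA; lra. }
      destruct (IHN p q (r - p)%Z (s - q)%Z y (lehner z)) as [n [En Pn]]; auto; try lia.
      exists (S n). split.
      * unfold lehner_iter. rewrite Nat.iter_succ_r. exact En.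
      * rewrite pz_shift, Pn. unfold sgnB, X. simpl. destruct Rlt_dec; [|lra]. ring.
    + assert (Hz: Dn < 2 * Nm).
      { assert (Dn <= 2 * Nm).
        { unfold Nm, Dn. apply IZR_le in B1. apply IZR_le in B2. rewrite !mult_IZR, !plus_IZR in *.
          simpl in *. nra. }
        assert (2 * Nm <> Dn) by (intro; apply NZ; unfold Nm, Dn in *; lra). lra. }
      assert (Nm0 : 0 < Nm) by lra.
      assert (Ez2 : (z - 1) * Dn = Nm) by (apply div_mul_eq; auto; lra).
      assert (zgt : z > 3/2) by nra.
      assert (Hl : lehner z - 1 = (IZR (r - p) * v + IZR (s - q)) / (IZR p * v + IZR q)).
      { unfold lehner. destruct Rlt_dec; [lra|]. rewrite !minus_IZR.
        replace ((IZR r - IZR p) * v + (IZR s - IZR q)) with (Dn - Nm) by (unfold Dn, Nm; ring).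
        change (IZR p * v + IZR q) with Nm.
        apply hlB; lra. }
      destruct (IHN (r - p)%Z (s - q)%Z p q y (lehner z)) as [n [En Pn]]; auto; try lia.
      exists (S n). split.
      * unfold lehner_iter. rewrite Nat.iter_succ_r. exact En.
      * rewrite pz_shift, Pn. unfold sgnB, X. simpl. destruct Rlt_dec; [lra|]. ring.
Qed.

Record M4 := mk4 { mp : Z; mq : Z; mr : Z; ms : Z }.

Fixpoint Wm (x : R) (k : nat) : M4 :=
  match k with
  | O => mk4 1 0 0 1
  | S k' => let W := Wm x k' in
      if Rlt_dec (X x k') (3/2) then mk4 (mp W + mq W) (mq W) (mr W + ms W) (ms W)
      else mk4 (mq W) (mp W + mq W) (ms W) (mr W + ms W)
  end.

Lemma Wm_props x k :
  (0 <= mp (Wm x k))%Z /\ (0 <= mq (Wm x k))%Z /\ (0 <= mr (Wm x k))%Z /\ (1 <= ms (Wm x k))%Z /\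
  (mp (Wm x k) * ms (Wm x k) - mq (Wm x k) * mr (Wm x k) = pz x k)%Z.
Proof.
  induction k. { simpl. lia. }
  simpl Wm. simpl pz. unfold sgnB. destruct Rlt_dec; simpl; destruct IHk as [h1 [h2 [h3 [h4 h5]]]];
  rewrite <- h5; repeat split; try lia; ring.
Qed.

Lemma Wm_eq x k : irr' x -> 1 < x < 2 ->
  x - 1 = (IZR (mp (Wm x k)) * (X x k - 1) + IZR (mq (Wm x k))) /
          (IZR (mr (Wm x k)) * (X x k - 1) + IZR (ms (Wm x k))).
Proof.
  intros H h. induction k. { simpl. unfold X. simpl. field. }
  destruct (Wm_props x k) as [h1 [h2 [h3 [h4 _]]]].
  apply IZR_le in h1, h2, h3, h4.
  destruct (X_props x H h k) as [_ hk]. destruct (X_props x H h (S k)) as [_ hk1].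
  rewrite IHk. simpl Wm. rewrite X_S in *. unfold lehner in *.
  set (p := IZR (mp (Wm x k))) in *. set (q := IZR (mq (Wm x k))) in *.
  set (r := IZR (mr (Wm x k))) in *. set (s := IZR (ms (Wm x k))) in *.
  set (w := X x k) in *.
  destruct Rlt_dec; simpl; rewrite !plus_IZR; fold p q r s.
  - assert (0 < r * (w - 1) + s) by nra.
    assert (0 < (r + s) * (/ (2 - w) - 1) + s) by nra.
    field. repeat split; lra.
  - assert (0 < r * (w - 1) + s) by nra.
    assert (0 < s * (/ (w - 1) - 1) + (r + s)) by nra.
    field. repeat split; lra.
Qed.

Lemma W_step x k :
  (ms (Wm x k) <= ms (Wm x (S k)))%Z /\ (ms (Wm x k) <= mr (Wm x (S k)))%Z /\
  (3/2 <= X x k -> (ms (Wm x (S k)) = mr (Wm x k) + ms (Wm x k))%Z).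
Proof.
  destruct (Wm_props x k) as [h1 [h2 [h3 [h4 _]]]].
  simpl Wm. destruct Rlt_dec; simpl; repeat split; try lia. intro. lra.
Qed.

Lemma ms_mono x k j : (k <= j)%nat -> (ms (Wm x k) <= ms (Wm x j))%Z.
Proof.
  induction 1. lia. destruct (W_step x m). lia.
Qed.

Lemma ms_grow x : irr' x -> 1 < x < 2 -> forall n : nat, exists k, (Z.of_nat n <= ms (Wm x k))%Z.
Proof.
  intros H h n. induction n. { exists 0%nat. simpl. lia. }
  destruct IHn as [k hk]. destruct (inf_B x H h (S k)) as [j [hj hB]].
  exists (S j). destruct (W_step x j) as [_ [_ E]]. rewrite (E hB).
  destruct j as [|j']; [lia|].
  destruct (W_step x j') as [_ [E2 _]]. pose proof (ms_mono x k (S j') ltac:(lia)).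
  pose proof (Wm_props x j') as [_ [_ [_ [h4 _]]]]. lia.
Qed.

Lemma rs_grow x : irr' x -> 1 < x < 2 -> forall B : Z, exists k, (B <= mr (Wm x k))%Z /\ (B <= ms (Wm x k))%Z.
Proof.
  intros H h B. destruct (ms_grow x H h (Z.to_nat B)) as [k hk].
  exists (S k). destruct (W_step x k) as [E1 [E2 _]]. lia.
Qed.

Ltac zp := repeat (rewrite mult_IZR || rewrite plus_IZR || rewrite minus_IZR || rewrite opp_IZR).

Lemma G (z : Z) (main : R) (k dl t : Z) (E : R) :
  IZR z = main + IZR k * (IZR dl / E) -> 0 <= main -> (dl = 1 \/ dl = -1)%Z ->
  (Z.abs k < t)%Z -> IZR t <= E -> (0 <= z)%Z.
Proof.
  intros Ez hm hd hk hE.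
  assert (h1 : IZR (- t) < IZR k) by (apply IZR_lt; lia).
  assert (h2 : IZR k < IZR t) by (apply IZR_lt; lia).
  rewrite opp_IZR in h1.
  assert (Ep : 0 < E). { assert (0 < IZR t) by (apply IZR_lt; lia). lra. }
  assert (T : -1 < IZR k * (IZR dl / E)).
  { set (w := IZR k / E). assert (IZR k = w * E) by (unfold w; field; lra).
    replace (IZR k * (IZR dl / E)) with (w * IZR dl) by (unfold w; field; lra).
    destruct hd as [-> | ->]; simpl; nra. }
  assert (IZR (-1) < IZR z) by (simpl; lra). apply lt_IZR in H. lia.
Qed.

Lemma core (a b c d p q r s dl sg : Z) (al be v : R) :
  (a * d - b * c = 1)%Z -> (dl = 1 \/ dl = -1)%Z -> (sg = 1 \/ sg = -1)%Z ->
  (p * s - q * r = dl)%Z -> (0 <= p)%Z -> (0 <= q)%Z -> (0 <= r)%Z -> (1 <= s)%Z ->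
  (Z.abs (a - c) + Z.abs c + Z.abs (c - (a - c)) < r)%Z ->
  (Z.abs (a - c) + Z.abs c + Z.abs (c - (a - c)) < s)%Z ->
  0 < v < 1 -> 1 < be < 2 ->
  al - 1 = (IZR p * v + IZR q) / (IZR r * v + IZR s) ->
  0 < IZR sg * (IZR c * al + IZR d) ->
  be = (IZR a * al + IZR b) / (IZR c * al + IZR d) ->
  let P := (sg * ((a - c) * p + (a + b - c - d) * r))%Z in
  let Q := (sg * ((a - c) * q + (a + b - c - d) * s))%Z in
  let R' := (sg * (c * p + (c + d) * r))%Z in
  let S' := (sg * (c * q + (c + d) * s))%Z in
  (0 <= P)%Z /\ (0 <= Q)%Z /\ (0 <= R')%Z /\ (0 <= S')%Z /\ (Q <= S')%Z /\ (P + Q <= R' + S')%Z /\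
  (P * S' - Q * R' = dl)%Z /\
  be - 1 = (IZR P * v + IZR Q) / (IZR R' * v + IZR S').
Proof.
  intros Det Hdl Hsg Hdet hp hq hr hs Br Bs hv hbe Hal Hlam Hbe P Q R' S'.
  assert (Lnz : IZR c * al + IZR d <> 0) by (intro E; rewrite E in Hlam; lra).
  assert (Dp : 0 < IZR r * v + IZR s).
  { apply IZR_le in hr. apply IZR_le in hs. nra. }
  assert (Rp : 1 <= IZR r) by (apply IZR_le; lia).
  assert (DR : IZR dl = IZR p * IZR s - IZR q * IZR r) by (rewrite <- Hdet, minus_IZR, !mult_IZR; ring).
  assert (Hal' : al = 1 + (IZR p * v + IZR q) / (IZR r * v + IZR s)) by lra.
  remember (IZR r * v + IZR s) as D eqn:HD.
  assert (e1 : IZR p - (al - 1) * IZR r = IZR dl / D).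
  { rewrite Hal', DR, HD. field. lra. }
  assert (e2 : IZR q - (al - 1) * IZR s = IZR (- dl) / (D / v)).
  { rewrite Hal', opp_IZR, DR, HD. field. lra. }
  assert (e3 : IZR p + IZR q - (al - 1) * (IZR r + IZR s) = IZR dl / (D / (1 - v))).
  { rewrite Hal', DR, HD. field. lra. }
  assert (b1 : IZR r <= D / v).
  { apply IZR_le in hs. replace (D / v) with (IZR r + IZR s / v) by (rewrite HD; field; lra).
    assert (0 <= IZR s / v) by (unfold Rdiv; apply Rmult_le_pos; [lra | apply Rlt_le, Rinv_0_lt_compat; lra]). lra. }
  assert (b2 : IZR s <= D / (1 - v)).
  { assert (IZR s <= D) by (rewrite HD; apply IZR_le in hr; nra).
    assert (D <= D / (1 - v)).
    { apply (Rmult_le_reg_r (1 - v)). lra. replace (D / (1 - v) * (1 - v)) with D by (field; lra). nra. }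
    lra. }
  assert (b3 : IZR s <= D) by (rewrite HD; apply IZR_le in hr; nra).
  set (lam := IZR c * al + IZR d) in *.
  assert (Hmu : IZR a * al + IZR b - lam = (be - 1) * lam) by (rewrite Hbe; unfold lam; field; auto).
  assert (m1 : 0 <= IZR sg * (IZR a * al + IZR b - lam)).
  { rewrite Hmu. replace (IZR sg * ((be - 1) * lam)) with ((be - 1) * (IZR sg * lam)) by ring. nra. }
  assert (m2 : 0 <= IZR sg * (lam - (IZR a * al + IZR b - lam))).
  { replace (lam - (IZR a * al + IZR b - lam)) with ((2 - be) * lam) by (rewrite <- (Rmult_1_l lam) at 1; lra).
    replace (IZR sg * ((2 - be) * lam)) with ((2 - be) * (IZR sg * lam)) by ring. nra. }
  assert (sabs : forall z : Z, Z.abs (sg * z) = Z.abs z) by (intro z; destruct Hsg as [-> | ->]; lia).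
  assert (hP : (0 <= P)%Z).
  { apply (G P (IZR r * (IZR sg * (IZR a * al + IZR b - lam))) (sg * (a - c)) dl s D); auto.
    - rewrite <- e1. unfold P, lam. zp. ring.
    - apply Rmult_le_pos; lra.
    - rewrite sabs. lia. }
  assert (hQ : (0 <= Q)%Z).
  { apply (G Q (IZR s * (IZR sg * (IZR a * al + IZR b - lam))) (sg * (a - c)) (- dl) r (D / v)); auto.
    - rewrite <- e2. unfold Q, lam. zp. ring.
    - apply Rmult_le_pos; try lra. apply IZR_le; lia.
    - lia.
    - rewrite sabs. lia. }
  assert (hR : (0 <= R')%Z).
  { apply (G R' (IZR r * (IZR sg * lam)) (sg * c) dl s D); auto.
    - rewrite <- e1. unfold R', lam. zp. ring.
    - apply Rmult_le_pos; lra.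
    - rewrite sabs. lia. }
  assert (hS : (0 <= S')%Z).
  { apply (G S' (IZR s * (IZR sg * lam)) (sg * c) (- dl) r (D / v)); auto.
    - rewrite <- e2. unfold S', lam. zp. ring.
    - apply Rmult_le_pos; try lra. apply IZR_le; lia.
    - lia.
    - rewrite sabs. lia. }
  assert (hQS : (0 <= S' - Q)%Z).
  { apply (G (S' - Q) (IZR s * (IZR sg * (lam - (IZR a * al + IZR b - lam)))) (sg * (c - (a - c))) (- dl) r (D / v)); auto.
    - rewrite <- e2. unfold S', Q, lam. zp. ring.
    - apply Rmult_le_pos; try lra. apply IZR_le; lia.
    - lia.
    - rewrite sabs. lia. }
  assert (hPQ : (0 <= (R' + S') - (P + Q))%Z).
  { apply (G ((R' + S') - (P + Q)) ((IZR r + IZR s) * (IZR sg * (lam - (IZR a * al + IZR b - lam)))) (sg * (c - (a - c))) dl s (D / (1 - v))); auto.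
    - rewrite <- e3. unfold S', Q, R', P, lam. zp. ring.
    - apply Rmult_le_pos; try lra. assert (0 <= IZR s) by (apply IZR_le; lia). lra.
    - rewrite sabs. lia. }
  assert (ss : (sg * sg = 1)%Z) by (destruct Hsg as [-> | ->]; lia).
  split; [auto|]. split; [auto|]. split; [auto|]. split; [auto|]. split; [lia|]. split; [lia|]. split.
  - unfold P, Q, R', S'.
    replace ((sg * ((a - c) * p + (a + b - c - d) * r)) * (sg * (c * q + (c + d) * s)) -
             (sg * ((a - c) * q + (a + b - c - d) * s)) * (sg * (c * p + (c + d) * r)))%Z
      with ((sg * sg) * ((a * d - b * c) * (p * s - q * r)))%Z by ring.
    rewrite ss, Det, Hdet. ring.
  - assert (N1 : IZR P * v + IZR Q = IZR sg * (IZR a * al + IZR b - lam) * D).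
    { unfold P, Q, lam. rewrite Hal', HD. zp. field. lra. }
    assert (N2 : IZR R' * v + IZR S' = IZR sg * lam * D).
    { unfold R', S', lam. rewrite Hal', HD. zp. field. lra. }
    rewrite N1, N2, Hmu. field. split; [lra|]. split; [auto|]. intro E; rewrite E in Hlam; lra.
Qed.

Lemma forward al be : irr' al -> irr' be -> 1 < al < 2 -> 1 < be < 2 -> psl2z_equiv al be ->
  exists k n, X be n = X al k /\ pz be n = pz al k.
Proof.
  intros Ha Hb ha hb [a [b [c [d [Det Eb]]]]].
  destruct (rs_grow al Ha ha (Z.abs (a-c) + Z.abs c + Z.abs (c-(a-c)) + 1)) as [k [hr hs]].
  destruct (Wm_props al k) as [h1 [h2 [h3 [h4 h5]]]].
  destruct (X_props al Ha ha k) as [Hy hy].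
  pose proof (mob_den al c d a b Ha Det) as Lnz.
  assert (Hsg : exists sg : Z, (sg = 1 \/ sg = -1)%Z /\ 0 < IZR sg * (IZR c * al + IZR d)).
  { destruct (Rlt_or_le 0 (IZR c * al + IZR d)).
    - exists 1%Z. split; auto. simpl. lra.
    - exists (-1)%Z. split; auto. simpl. lra. }
  destruct Hsg as [sg [Hsg Hl]].
  pose proof (core a b c d (mp (Wm al k)) (mq (Wm al k)) (mr (Wm al k)) (ms (Wm al k)) (pz al k) sg al be (X al k - 1)
     Det (pz_pm al k) Hsg h5 h1 h2 h3 h4 ltac:(lia) ltac:(lia) ltac:(lra) hb (Wm_eq al k Ha ha) Hl Eb) as C.
  cbv zeta in C. destruct C as [c1 [c2 [c3 [c4 [c5 [c6 [c7 c8]]]]]]].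
  edestruct descent as [n [En Pn]]; [apply le_n | exact c1 | exact c2 | exact c3 | exact c4 | | exact c5 | exact c6 | exact Hy | exact hy | exact c8 |].
  { rewrite c7. apply pz_pm. }
  exists k, n. split. exact En. rewrite Pn, c7. reflexivity.
Qed.

Lemma align al be k n : X be n = X al k -> pz be n = pz al k ->
  forall j, X be (n + j) = X al (k + j) /\ pz be (n + j) = pz al (k + j).
Proof.
  intros E P j. induction j. { rewrite !Nat.add_0_r. auto. }
  rewrite !Nat.add_succ_r. destruct IHj as [E1 P1]. split.
  - rewrite !X_S, E1. reflexivity.
  - simpl pz. rewrite P1. unfold sgnB. rewrite E1. reflexivity.
Qed.

Theorem proposition6p3 (alpha beta : R) :
  irrational alpha -> irrational beta ->
  1 < alpha < 2 -> 1 < beta < 2 ->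
  (psl2z_equiv alpha beta <->
     exists (r s : nat) (y : R), (0 < r)%nat /\ (0 < s)%nat /\
       is_tail alpha r y /\ is_tail beta s y) /\
  (forall m : nat, exists y : R, is_tail alpha m y /\ psl2z_equiv alpha y).
Proof.
  intros Ia Ib ha hb. apply irr_irr' in Ia. apply irr_irr' in Ib.
  split; [split|].
  - intro Heq. destruct (forward alpha beta Ia Ib ha hb Heq) as [k [n [E P]]].
    destruct (align alpha beta k n E P 2) as [E2 P2].
    exists (S k), (S n), (Tz alpha (S (S k))). split; [lia|]. split; [lia|]. split.
    + apply Tz_tail; auto.
    + replace (Tz alpha (S (S k))) with (Tz beta (S (S n))).
      * apply Tz_tail; auto.
      * unfold Tz. replace (S (S n)) with (n + 2)%nat by lia. replace (S (S k)) with (k + 2)%nat by lia.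
        rewrite E2, P2. reflexivity.
  - intros [r [s [y [_ [_ [Ta Tb]]]]]].
    apply tail_Tz in Ta; auto. apply tail_Tz in Tb; auto.
    apply (equiv_trans alpha y beta Ia Ib).
    + rewrite Ta. apply Tz_equiv; auto.
    + rewrite Tb. apply Tz_equiv; auto.
  - intro m. exists (Tz alpha (S m)). split. apply Tz_tail; auto. apply Tz_psl; auto.
Qed.
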